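(* Let $p\ge1$, $h,w,s$ positive integers with $s\le h$, $X\in\mathbb{R}^{h\times w}$ nonzero, $0<B\le wh^2$, $\delta\in(0,1/4)$, and $x_{\min}=\min_{|X_{i,j}|>0}|X_{i,j}|^p$. Let $0\le r\le l$ with $l-r\le \delta x_{\min}/(wh^2)$. Let $\Omega_l$ be an $l$-optimal support with $\mathrm{EMD}[\Omega_l]\le B$ and $\Omega_r$ an $r$-optimal support with $\mathrm{EMD}[\Omega_r]\ge B$. Let $d=\lfloor \mathrm{EMD}[\Omega_r]/B\rfloor$ and let $\Omega_r'$ be any support with $\Phi[\Omega_r']\ge\Phi[\Omega_r]/(2(d+1))$. Then, with $\mathrm{OPT}=\max_{\Omega\in\mathbb{M}_{k,B}}\Phi[\Omega]$, $$\max\{\Phi[\Omega_r'],\Phi[\Omega_l]\}\ \ge\ \left(\tfrac14-\delta\right)\mathrm{OPT}.$$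
   Context: A support is a set $\Omega\subseteq[h]\times[w]$, with columns $\Omega_j=\{i:(i,j)\in\Omega\}$; $\Phi[\Omega]=\sum_{(i,j)\in\Omega}|X_{i,j}|^p$. For finite $A,B\subset\mathbb{N}$ with $|A|=|B|$, $\mathrm{EMD}(A,B)=\min_\pi\sum_{a\in A}|a-\pi(a)|$ over bijections $\pi:A\to B$; if every column has $s$ elements, $\mathrm{EMD}[\Omega]=\sum_{j=1}^{w-1}\mathrm{EMD}(\Omega_j,\Omega_{j+1})$. $\mathcal{S}_s$ is the set of supports with $|\Omega_j|=s$ for all $j$, and $\mathbb{M}_{k,B}=\{\Omega\in\mathcal{S}_s:\mathrm{EMD}[\Omega]\le B\}$ where $k=sw$. For $\lambda\ge0$, a support $\Omega$ is $\lambda$-optimal if $\Omega\in\mathcal{S}_s$ and it maximizes $\Phi[\Omega]-\lambda\,\mathrm{EMD}[\Omega]$ over $\mathcal{S}_s$ (equivalently, it is the support of an integral min-cost max-flow in the EMD flow network with node costs $-|X_{i,j}|^p$, edge costs $\lambda|i_1-i_2|$ between consecutive columns, unit capacities, and supply/demand $s$). *)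

(* Defs.v *)
From Stdlib Require Import Reals.
From mathcomp Require Import all_boot all_fingroup.
Set Implicit Arguments.
#[local] Open Scope R_scope. Unset Strict Implicit. Unset Printing Implicit Defensive.

(* |x|^p for x >= 0 and real p >= 1, with 0^p = 0 (Stdlib's Rpower 0 p = 1). *)
Definition powp (x p : R) : R :=
  if Rle_dec x 0 then R0 else Rpower x p.

Definition nzR (x : R) : bool := if Req_EM_T x 0 then false else true.

Definition supp (h w : nat) := {set 'I_h * 'I_w}.

Definition col (h w : nat) (Om : supp h w) (j : nat) : {set 'I_h} :=
  [set i | [exists jj : 'I_w, (nat_of_ord jj == j) && ((i, jj) \in Om)]].

Definition distn (a b : nat) : nat := addn (subn a b) (subn b a).

(* EMD(A,B) = min over bijections pi : A -> B of sum_{a in A} |a - pi a|.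
   Bijections A -> B are exactly the restrictions of permutations sigma of
   'I_h with sigma @: A = B.  (Default h*h is never attained when |A| = |B|,
   since every matching cost is <= h*h.) *)
Definition emd (h : nat) (A B : {set 'I_h}) : nat :=
  \big[minn/(muln h h)]_(sg : {perm 'I_h} | sg @: A == B)
     \big[addn/0%N]_(a in A) distn a (sg a).

Definition EMD (h w : nat) (Om : supp h w) : nat :=
  \big[addn/0%N]_(0 <= j < w.-1) emd (col Om j) (col Om j.+1).

Definition Phi (h w : nat) (p : R) (X : 'I_h -> 'I_w -> R) (Om : supp h w) : R :=
  \big[Rplus/R0]_(ij in Om) powp (Rabs (X ij.1 ij.2)) p.

Definition inS (h w s : nat) (Om : supp h w) : Prop :=
  forall j : 'I_w, #|col Om j| = s.

(* Omega \in M_{k,B} with k = s w *)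
Definition inM (h w s : nat) (B : R) (Om : supp h w) : Prop :=
  inS s Om /\ Rle (INR (EMD Om)) B.

Definition inMb (h w s : nat) (B : R) (Om : supp h w) : bool :=
  [forall j : 'I_w, #|col Om j| == s] && (if Rle_dec (INR (EMD Om)) B then true else false).

Definition lam_opt (h w s : nat) (p : R) (X : 'I_h -> 'I_w -> R) (lam : R)
  (Om : supp h w) : Prop :=
  inS s Om /\
  forall Om' : supp h w, inS s Om' ->
    Rle (Rminus (Phi p X Om') (Rmult lam (INR (EMD Om')))) (Rminus (Phi p X Om) (Rmult lam (INR (EMD Om)))).

(* OPT = max_{Omega in M_{k,B}} Phi[Omega]  (Phi >= 0, so default 0 is harmless
   when M_{k,B} is nonempty, which holds under the hypotheses) *)
Definition OPT (h w s : nat) (p : R) (X : 'I_h -> 'I_w -> R) (B : R) : R :=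
  \big[Rmax/R0]_(Om : supp h w | inMb s B Om) Phi p X Om.

(* x_min = min over nonzero entries of |X_{i,j}|^p (default: the max entry,
   irrelevant when X is nonzero) *)
Definition xmin (h w : nat) (p : R) (X : 'I_h -> 'I_w -> R) : R :=
  \big[Rmin/(\big[Rmax/R0]_(ij : 'I_h * 'I_w) powp (Rabs (X ij.1 ij.2)) p)]_(ij : 'I_h * 'I_w | nzR (X ij.1 ij.2))
     powp (Rabs (X ij.1 ij.2)) p.

(* Main.v *)
Require Import Defs.
From Stdlib Require Import Reals Lra.
From mathcomp Require Import all_boot all_fingroup.
#[local] Open Scope R_scope.

Lemma powp_ge0 x p : 0 <= powp x p.
Proof.
rewrite /powp; case: Rle_dec => H0 /=; first lra.
rewrite /Rpower; left; apply: exp_pos.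
Qed.

Lemma Phi_ge0 h w p (X : 'I_h -> 'I_w -> R) Om : 0 <= Phi p X Om.
Proof.
rewrite /Phi; apply: (big_ind (fun x => 0 <= x)); first lra.
  move=> x y; lra.
move=> i _; exact: powp_ge0.
Qed.

Lemma bigmin_le (T : finType) (P : pred T) (F : T -> R) d i0 :
  P i0 -> \big[Rmin/d]_(i | P i) F i <= F i0.
Proof.
move=> Pi0; have : i0 \in index_enum T by apply: mem_index_enum.
elim: (index_enum T) => [|a r IH] //=.
rewrite big_cons inE; case/orP => [/eqP <-|Hr].
  by rewrite Pi0; apply: Rmin_l.
case: (P a); last exact: IH.
apply: Rle_trans (IH Hr); apply: Rmin_r.
Qed.

Lemma bigmax_att (T : finType) (P : pred T) (F : T -> R) :
  \big[Rmax/R0]_(i | P i) F i = 0 \/ exists i, P i /\ \big[Rmax/R0]_(i | P i) F i = F i.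
Proof.
apply: (big_ind (fun x => x = 0 \/ exists i, P i /\ x = F i));
  [by left| |by move=> i Pi; right; exists i].
move=> x y Hx Hy; rewrite /Rmax; by case: Rle_dec.
Qed.

Lemma Phi_xmin h w p (X : 'I_h -> 'I_w -> R) Om :
  Phi p X Om = 0 \/ xmin p X <= Phi p X Om.
Proof.
suff : (fun x => 0 <= x /\ (x = 0 \/ xmin p X <= x)) (Phi p X Om) by case.
  apply: (big_ind (fun x => 0 <= x /\ (x = 0 \/ xmin p X <= x))); first by split; [lra|left].
    move=> x y [Hx0 Hx] [Hy0 Hy]; split; first lra.
    by case: Hx => Hx; case: Hy => Hy; [left|right|right|right]; lra.
  move=> ij _; split; first exact: powp_ge0.
  case E: (nzR (X ij.1 ij.2)).
    by right; rewrite /xmin; apply: (@bigmin_le _ (fun ij : _ * _ => nzR (X ij.1 ij.2))).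
  left; move: E; rewrite /nzR; case: Req_EM_T => /= [-> _|] //.
  by rewrite Rabs_R0 /powp; case: Rle_dec => /= H; lra.
Qed.

Arguments Phi_ge0 {h w}.
Arguments Phi_xmin {h w}.

Theorem lemma11 (p : R) (h w s : nat) (X : 'I_h -> 'I_w -> R) (B delta l r : R)
  (Om_l Om_r Om_r' : supp h w) (d : nat) :
  (1 <= p) ->
  leq 1 h -> leq 1 w -> leq 1 s -> leq s h ->
  (exists i j, X i j <> 0) ->
  (0 < B) -> (B <= INR w * pow (INR h) 2) ->
  (0 < delta) -> (delta < 1 / 4) ->
  (0 <= r) -> (r <= l) ->
  (l - r <= delta * xmin p X / (INR w * pow (INR h) 2)) ->
  lam_opt s p X l Om_l -> (INR (EMD Om_l) <= B) ->
  lam_opt s p X r Om_r -> (B <= INR (EMD Om_r)) ->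
  (INR d <= INR (EMD Om_r) / B < INR d + 1) ->
  (Phi p X Om_r' >= Phi p X Om_r / (2 * (INR d + 1))) ->
  (Rmax (Phi p X Om_r') (Phi p X Om_l) >= (1 / 4 - delta) * OPT s p X B).
Proof.
move=> _ _ _ _ _ _ HB HBW Hd0 Hd1 Hr Hrl Hlr [_ Hl] HEl [_ Hrr] HEr [Hd Hd'] Hr'.
have Pl0 := Phi_ge0 p X Om_l.
have Pr0 := Phi_ge0 p X Om_r'.
apply: Rle_ge.
case: (@bigmax_att _ (fun Om => inMb s B Om) (Phi p X)) => [HO|[Om [HM HO]]];
  rewrite /OPT ?HO.
  apply: Rle_trans (Rmax_r _ _); lra.
move: HM; rewrite /inMb => /andP [/forallP HS HE].
have HSs : inS s Om by move=> j; apply/eqP; exact: HS.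
have HEs : INR (EMD Om) <= B by move: HE; case: Rle_dec => //=.
case: (Phi_xmin p X Om) => [->|Hx].
  apply: Rle_trans (Rmax_r _ _); lra.
set O := Phi p X Om in Hx *.
have O0 : 0 <= O := Phi_ge0 p X Om.
have H1 := Hl Om HSs. have H2 := Hrr Om HSs.
rewrite -/O in H1 H2.
set W := INR w * pow (INR h) 2 in HBW Hlr.
set El := INR (EMD Om_l) in H1 HEl *.
set Er := INR (EMD Om_r) in H2 HEr Hd Hd' *.
set Es := INR (EMD Om) in H1 H2 HEs.
have El0 : 0 <= El by apply: pos_INR.
have W0 : 0 < W by lra.
have H3 : (l - r) * B <= delta * O.
  have : 0 <= delta * xmin p X / W by lra.
  move=> Hn.
  apply: Rle_trans (_ : delta * xmin p X / W * B <= _).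
    apply: Rmult_le_compat_r; lra.
  apply: Rle_trans (_ : delta * xmin p X / W * W <= _).
    apply: Rmult_le_compat_l; lra.
  have -> : delta * xmin p X / W * W = delta * xmin p X by field; lra.
  apply: Rmult_le_compat_l; lra.
have Hl' : Phi p X Om_l >= O - l * B.
  have : l * Es <= l * B by apply: Rmult_le_compat_l; lra.
  have : 0 <= l * El by apply: Rmult_le_pos; lra.
  lra.
have Hr2 : Phi p X Om_r >= O + r * Er - r * B.
  have : r * Es <= r * B by apply: Rmult_le_compat_l; lra.
  lra.
have HdB : INR d * B <= Er.
  have -> : Er = Er / B * B by field; lra.
  apply: Rmult_le_compat_r; lra.
have Hd1' : 1 <= INR d.
  have : 1 <= Er / B.
    have -> : 1 = B / B by field; lra.
    apply: Rmult_le_compat_r; [left; apply: Rinv_0_lt_compat|]; lra.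
  move=> H.
  have aux : forall n, INR n + 1 > 1 -> 1 <= INR n.
    case=> [|n]; first (simpl; lra).
    rewrite S_INR; have := pos_INR n; lra.
  apply: aux; lra.
case: (Rle_dec ((1/4 - delta) * O) (Phi p X Om_l)) => Hc.
  apply: Rle_trans (Rmax_r _ _); lra.
apply: Rle_trans (Rmax_l _ _).
have HrB : 3/4 * O <= r * B by lra.
have Hrd : r * (INR d * B) <= r * Er by apply: Rmult_le_compat_l.
have Hq : (INR d - 1) * (3/4 * O) <= (INR d - 1) * (r * B).
  apply: Rmult_le_compat_l; lra.
have Hk : (1/4 - delta) * O * (2 * (INR d + 1)) <= Phi p X Om_r.
  have : 0 <= delta * O * (2 * (INR d + 1)).
    apply: Rmult_le_pos; [apply: Rmult_le_pos|]; lra.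
  have : 0 <= (INR d - 1) * O by apply: Rmult_le_pos; lra.
  nra.
apply: Rle_trans (Rge_le _ _ Hr').
have -> : (1/4 - delta) * O = (1/4 - delta) * O * (2 * (INR d + 1)) / (2 * (INR d + 1)).
  field; lra.
apply: Rmult_le_compat_r; last exact: Hk.
left; apply: Rinv_0_lt_compat; lra.
Qed.
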